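(* For any pair of jointly distributed finite-valued random variables $(X,Y)\sim p_{XY}$: (a) $\tilde C_W(Y\backslash X)=H(Q_Y^X)$; (b) $\tilde P_W(Y\backslash X)=H(Y|Q_Y^X)$; (c) $H(Y)=\tilde C_W(Y\backslash X)+\tilde P_W(Y\backslash X)=H(Q_Y^X)+H(Y|Q_Y^X)$; (d) $C_W(X;Y)\leq \tilde C_W(Y\backslash X)$.
   Context: For finite-valued random variables, $A-B-C$ means that $A$ and $C$ are conditionally independent given $B$. Optimizations below are over finite-valued random variables $Q$ jointly distributed with $(X,Y)$ (marginal of $(X,Y)$ fixed). Define $\tilde P_W(Y\backslash X)=\max\{H(Y|Q): X-Q-Y \text{ and } X-Y-Q\}$, $\tilde C_W(Y\backslash X)=\min\{H(Q): X-Q-Y \text{ and } X-Y-Q\}$, and Wyner's common information $C_W(X;Y)=\min\{I(XY;Q): X-Q-Y\}$, where $XY$ denotes the joint variable $(X,Y)$. Let $Q_Y^X=f(Y)$ with $f(y)=p_{X|Y}(\cdot|y)$ (a distribution on the alphabet of $X$), i.e. $Q_Y^X$ identifies values of $Y$ inducing the same conditional distribution of $X$. *)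

(* Defs.v *)
From HB Require Import structures.
From mathcomp Require Import all_boot all_order all_algebra.
From mathcomp Require Import classical_sets boolp reals exp.
Set Implicit Arguments. Unset Strict Implicit. Unset Printing Implicit Defensive.
Import Order.TTheory GRing.Theory Num.Theory.
Local Open Scope ring_scope.
Local Open Scope classical_set_scope.

Section InfoDefs.
Variable R : realType.

Definition is_dist (T : finType) (p : {ffun T -> R}) : Prop :=
  (forall t, 0 <= p t) /\ \sum_(t : T) p t = 1.

Definition pmf (T : finType) (U : eqType) (p : {ffun T -> R}) (f : T -> U)
  (u : U) : R := \sum_(t : T | f t == u) p t.

(* Shannon entropy (nats) of the random variable f; the sum ranges over the
   finite range of f, and 0 ln 0 = 0. *)
Definition ent (T : finType) (U : eqType) (p : {ffun T -> R}) (f : T -> U) : R :=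
  - \sum_(u <- undup [seq f t | t <- enum T]) pmf p f u * ln (pmf p f u).

Definition cent (T : finType) (U V : eqType) (p : {ffun T -> R})
  (f : T -> U) (g : T -> V) : R :=
  ent p (fun t => (f t, g t)) - ent p g.

Definition minf (T : finType) (U V : eqType) (p : {ffun T -> R})
  (f : T -> U) (g : T -> V) : R :=
  ent p f + ent p g - ent p (fun t => (f t, g t)).

(* Markov chain A - B - C : A and C conditionally independent given B,
   i.e. P(a,b,c) P(b) = P(a,b) P(b,c) for all a b c. *)
Definition markov (T : finType) (U V W : eqType) (p : {ffun T -> R})
  (a : T -> U) (b : T -> V) (c : T -> W) : Prop :=
  forall (x : U) (y : V) (z : W),
    pmf p (fun t => (a t, b t, c t)) (x, y, z) * pmf p b y =
    pmf p (fun t => (a t, b t)) (x, y) * pmf p (fun t => (b t, c t)) (y, z).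

Section Joint.
Variables (TX TY : finType).

Definition vX (TQ : finType) (t : TX * TY * TQ) : TX := t.1.1.
Definition vY (TQ : finType) (t : TX * TY * TQ) : TY := t.1.2.
Definition vXY (TQ : finType) (t : TX * TY * TQ) : TX * TY := t.1.
Definition vQ (TQ : finType) (t : TX * TY * TQ) : TQ := t.2.

Definition coupling (pXY : {ffun TX * TY -> R}) (TQ : finType)
  (p : {ffun TX * TY * TQ -> R}) : Prop :=
  is_dist p /\ forall xy, pmf p (@vXY TQ) xy = pXY xy.

Definition tP_set (pXY : {ffun TX * TY -> R}) : set R :=
  [set r | exists (TQ : finType) (p : {ffun TX * TY * TQ -> R}),
     [/\ coupling pXY p, markov p (@vX TQ) (@vQ TQ) (@vY TQ),
         markov p (@vX TQ) (@vY TQ) (@vQ TQ) & r = cent p (@vY TQ) (@vQ TQ)]].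

Definition tC_set (pXY : {ffun TX * TY -> R}) : set R :=
  [set r | exists (TQ : finType) (p : {ffun TX * TY * TQ -> R}),
     [/\ coupling pXY p, markov p (@vX TQ) (@vQ TQ) (@vY TQ),
         markov p (@vX TQ) (@vY TQ) (@vQ TQ) & r = ent p (@vQ TQ)]].

Definition CW_set (pXY : {ffun TX * TY -> R}) : set R :=
  [set r | exists (TQ : finType) (p : {ffun TX * TY * TQ -> R}),
     [/\ coupling pXY p, markov p (@vX TQ) (@vQ TQ) (@vY TQ)
       & r = minf p (@vXY TQ) (@vQ TQ)]].

Definition tPW (pXY : {ffun TX * TY -> R}) : R := sup (tP_set pXY).
Definition tCW (pXY : {ffun TX * TY -> R}) : R := inf (tC_set pXY).
Definition CW (pXY : {ffun TX * TY -> R}) : R := inf (CW_set pXY).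

(* Q_Y^X = f(Y), f(y) = p_{X|Y}(.|y) (with the MathComp convention
   x/0 = 0 on zero-probability y), as a random variable on TX * TY *)
Definition pY (pXY : {ffun TX * TY -> R}) (y : TY) : R :=
  pmf pXY (fun t : TX * TY => t.2) y.
Definition condX (pXY : {ffun TX * TY -> R}) (y : TY) : {ffun TX -> R} :=
  [ffun x => pXY (x, y) / pY pXY y].
Definition QYX (pXY : {ffun TX * TY -> R}) (t : TX * TY) : {ffun TX -> R} :=
  condX pXY t.2.
Definition rY (t : TX * TY) : TY := t.2.

End Joint.

Definition is_min (S : set R) (r : R) : Prop := S r /\ forall s, S s -> r <= s.
Definition is_max (S : set R) (r : R) : Prop := S r /\ forall s, S s -> s <= r.

End InfoDefs.

(* Main.v *)
Require Import Defs.
From HB Require Import structures.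
From mathcomp Require Import all_boot all_order all_algebra.
From mathcomp Require Import classical_sets boolp reals exp.
From mathcomp Require Import ring lra.
Set Implicit Arguments. Unset Strict Implicit. Unset Printing Implicit Defensive.
Import Order.TTheory GRing.Theory Num.Theory.
Local Open Scope ring_scope.

Section Gen.
Variable R : realType.
Variable T : finType.
Variable p : {ffun T -> R}.

Lemma sum_range (U : eqType) (f : T -> U) (G : U -> R) :
  \sum_(u <- undup [seq f t | t <- enum T]) G u * pmf p f u =
  \sum_t p t * G (f t).
Proof.
rewrite /pmf.
under eq_bigr => u _ do rewrite mulr_sumr big_mkcond /=.
rewrite (exchange_big (R:=R)) /=; apply: eq_bigr => t _.
have ft : f t \in undup [seq f t | t <- enum T].
  by rewrite mem_undup; apply/mapP; exists t; rewrite ?mem_enum.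
rewrite (big_rem _ ft) /= eqxx big_seq big1 ?addr0; first by rewrite mulrC.
move=> u; rewrite mem_rem_uniq ?undup_uniq // inE => /andP [hu _].
by rewrite eq_sym (negbTE hu).
Qed.

Lemma entE (U : eqType) (f : T -> U) :
  ent p f = - \sum_t p t * ln (pmf p f (f t)).
Proof.
rewrite /ent -(sum_range f (fun u => ln (pmf p f u))); congr (- _).
by apply: eq_bigr => u _; rewrite mulrC.
Qed.


Hypothesis p0 : forall t, 0 <= p t.

Lemma pmfE (U : eqType) (f : T -> U) u :
  pmf p f u = \sum_s (f s == u)%:R * p s.
Proof.
rewrite /pmf big_mkcond; apply: eq_bigr => s _.
by case: (f s == u); rewrite ?mul1r ?mul0r.
Qed.

Lemma pmf_ge0 (U : eqType) (f : T -> U) u : 0 <= pmf p f u.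
Proof. by apply: sumr_ge0 => s _; exact: p0. Qed.

Lemma pmf_ge (U : eqType) (f : T -> U) t : p t <= pmf p f (f t).
Proof.
rewrite /pmf (bigD1 t) //= lerDl; apply: sumr_ge0 => s _; exact: p0.
Qed.

Lemma ent_mono (U V : eqType) (a : T -> U) (b : T -> V) :
  (forall s s', 0 < p s -> 0 < p s' -> a s = a s' -> b s = b s') ->
  ent p b <= ent p a.
Proof.
move=> H; rewrite !entE lerN2; apply: ler_sum => t _.
have := p0 t; rewrite le_eqVlt => /orP [/eqP <-|pt]; first by rewrite !mul0r.
apply: ler_wpM2l; first exact: p0.
have Ha := lt_le_trans pt (pmf_ge a t).
have Hb := lt_le_trans pt (pmf_ge b t).
rewrite ler_ln ?posrE //.
rewrite !pmfE; apply: ler_sum => s _.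
case: eqP => [ha|_]; last by rewrite mul0r; apply: mulr_ge0 => //; exact: p0.
have := p0 s; rewrite le_eqVlt => /orP [/eqP <-|ps]; first by rewrite !mulr0.
by rewrite (H s t ps pt ha) eqxx.
Qed.


Lemma mul_sum2 (x : R) (f g : T -> R) (D : R) :
  x * ((\sum_s f s) * (\sum_s g s) / D) =
  \sum_s1 \sum_s2 f s1 * g s2 * (x / D).
Proof.
transitivity ((\sum_s f s) * (\sum_s g s) * (x / D)); first by rewrite mulrCA.
rewrite mulr_suml mulr_suml; apply: eq_bigr => s1 _.
rewrite mulr_sumr mulr_suml; apply: eq_bigr => s2 _ //.
Qed.

Lemma ssa_key (A B C : eqType) (a : T -> A) (b : T -> B) (c : T -> C) :
  \sum_t p t * (pmf p (fun s => (a s, c s)) (a t, c t) *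
                pmf p (fun s => (b s, c s)) (b t, c t) /
                (pmf p (fun s => (a s, b s, c s)) (a t, b t, c t) *
                 pmf p c (c t))) <= \sum_t p t.
Proof.
under eq_bigr => t _ do
  rewrite (pmfE (fun s => (a s, c s))) (pmfE (fun s => (b s, c s))) mul_sum2.
rewrite (exchange_big (R:=R)) /=.
under eq_bigr => s1 _ do rewrite (exchange_big (R:=R)) /=.
apply: (@le_trans _ _ (\sum_s1 \sum_s2 (c s2 == c s1)%:R * p s2 * (p s1 / pmf p c (c s1)))).
  apply: ler_sum => s1 _; apply: ler_sum => s2 _.
  have [e|ne] := eqVneq (c s2) (c s1); last first.
    rewrite big1; first by rewrite mul0r mul0r.
    move=> t _.
    case E1: ((a s1, c s1) == (a t, c t)); last by rewrite !mul0r.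
    case E2: ((b s2, c s2) == (b t, c t)); last by rewrite mul0r mulr0 mul0r.
    move: E1 E2 => /eqP [_ h1] /eqP [_ h2].
    by move: ne; rewrite h1 h2 eqxx.
  set v := (a s1, b s2, c s1).
  set K := p s1 * p s2 / pmf p c (c s1).
  have te : forall t,
    ((a s1, c s1) == (a t, c t))%:R * p s1 * (((b s2, c s2) == (b t, c t))%:R * p s2) *
    (p t / (pmf p (fun s => (a s, b s, c s)) (a t, b t, c t) * pmf p c (c t))) =
    ((a t, b t, c t) == v)%:R * p t / pmf p (fun s => (a s, b s, c s)) v * K.
    move=> t.
    case E1: ((a s1, c s1) == (a t, c t)); case E2: ((b s2, c s2) == (b t, c t));
      rewrite /= ?mulr1n ?mulr0n.
    - move: E1 E2 => /eqP [h1 h2] /eqP [h3 h4].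
      rewrite /v /K h1 h3 h2 eqxx /= mulr1n invfM; ring.
    - rewrite ?(mul0r, mulr0); case: eqP => [[h1 h2 h3]|_]; last by rewrite ?(mul0r, mulr0).
      by move: E2; rewrite h2 h3 -e eqxx.
    - rewrite ?(mul0r, mulr0); case: eqP => [[h1 h2 h3]|_]; last by rewrite ?(mul0r, mulr0).
      by move: E1; rewrite h1 h3 eqxx.
    - rewrite ?(mul0r, mulr0); case: eqP => [[h1 h2 h3]|_]; last by rewrite ?(mul0r, mulr0).
      by move: E1; rewrite h1 h3 eqxx.
  under eq_bigr => t _ do rewrite te.
  rewrite -!mulr_suml -pmfE /= mulr1n mul1r.
  have -> : p s2 * (p s1 / pmf p c (c s1)) = K by rewrite /K; ring.
  have K0 : 0 <= K.
    by rewrite /K; apply: divr_ge0; [apply: mulr_ge0; exact: p0 | exact: pmf_ge0].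
  have [->|nz] := eqVneq (pmf p (fun s => (a s, b s, c s)) v) 0.
    by rewrite mul0r mul0r.
  by rewrite divff // mul1r.
apply: ler_sum => s1 _.
rewrite -mulr_suml -pmfE.
have [->|nz] := eqVneq (pmf p c (c s1)) 0; first by rewrite mul0r; exact: p0.
by rewrite mulrC divfK.
Qed.


Lemma ssa (A B C : eqType) (a : T -> A) (b : T -> B) (c : T -> C) :
  ent p (fun s => (a s, b s, c s)) + ent p c <=
  ent p (fun s => (a s, c s)) + ent p (fun s => (b s, c s)).
Proof.
rewrite !entE.
set Lac := fun t => pmf p (fun s => (a s, c s)) (a t, c t).
set Lbc := fun t => pmf p (fun s => (b s, c s)) (b t, c t).
set Labc := fun t => pmf p (fun s => (a s, b s, c s)) (a t, b t, c t).
set Lc := fun t => pmf p c (c t).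
have key := ssa_key a b c.
have H : forall t, p t - p t * (Lac t * Lbc t / (Labc t * Lc t)) <=
   p t * (ln (Labc t) + ln (Lc t) - ln (Lac t) - ln (Lbc t)).
  move=> t.
  have := p0 t; rewrite le_eqVlt => /orP [/eqP <-|pt]; first by rewrite !mul0r subr0.
  have h1 : 0 < Lac t by apply: lt_le_trans pt (pmf_ge _ t).
  have h2 : 0 < Lbc t by apply: lt_le_trans pt (pmf_ge _ t).
  have h3 : 0 < Labc t by apply: lt_le_trans pt (pmf_ge _ t).
  have h4 : 0 < Lc t by apply: lt_le_trans pt (pmf_ge _ t).
  set z := Lac t * Lbc t / (Labc t * Lc t).
  have zp : 0 < z by rewrite /z divr_gt0 ?mulr_gt0.
  have lz : ln z = ln (Lac t) + ln (Lbc t) - (ln (Labc t) + ln (Lc t)).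
    by rewrite /z ln_div ?posrE ?mulr_gt0 // !lnM ?posrE.
  have hz : ln z <= z - 1.
    have := @le_ln1Dx R (z - 1); rewrite [1 + _]addrC subrK; apply; lra.
  have -> : p t - p t * z = p t * (1 - z) by ring.
  apply: ler_wpM2l; first exact: p0.
  lra.
have S : \sum_t (p t - p t * (Lac t * Lbc t / (Labc t * Lc t))) <=
   \sum_t p t * (ln (Labc t) + ln (Lc t) - ln (Lac t) - ln (Lbc t)).
  by apply: ler_sum => t _; exact: H t.
rewrite sumrB in S.
rewrite [X in _ <= X](eq_bigr (fun t => p t * ln (Labc t) + p t * ln (Lc t) - p t * ln (Lac t) - p t * ln (Lbc t))) in S; last by move=> t _ /=; ring.
rewrite !sumrB big_split /= in S.
rewrite /Labc /Lc /Lac /Lbc /= in S.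
lra.
Qed.

Lemma ent_ge0 (U : eqType) (f : T -> U) : \sum_t p t = 1 -> 0 <= ent p f.
Proof.
move=> s1; rewrite entE oppr_ge0; apply: sumr_le0 => t _.
apply: mulr_ge0_le0; first exact: p0.
apply: ln_le0; rewrite -s1 /pmf [leRHS](bigID (fun s => f s == f t)) /= lerDl.
by apply: sumr_ge0 => s _; exact: p0.
Qed.


Lemma ent_eq (U V : eqType) (a : T -> U) (b : T -> V) :
  (forall s s', a s = a s' <-> b s = b s') -> ent p a = ent p b.
Proof.
move=> H; apply/le_anti/andP; split; apply: ent_mono => s s' _ _; by move/H.
Qed.

End Gen.

Lemma sum_pair (R : realType) (A B : finType) (G : A * B -> R) :
  \sum_s G s = \sum_a \sum_b G (a, b).
Proof. by rewrite pair_bigA; apply: eq_bigr => -[a b]. Qed.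

Lemma sum_ind1 (R : realType) (A : finType) (a : A) (G : A -> R) :
  \sum_t (t == a)%:R * G t = G a.
Proof.
rewrite (bigD1 a) //= eqxx mul1r big1 ?addr0 // => t /negbTE ->.
by rewrite mul0r.
Qed.

Lemma sum_indr (R : realType) (A : finType) (a : A) (G : A -> R) :
  \sum_t G t * (t == a)%:R = G a.
Proof. by rewrite -(sum_ind1 a G); apply: eq_bigr => t _; rewrite mulrC. Qed.

Lemma indA (R : realType) (a b : bool) : (a && b)%:R = a%:R * b%:R :> R.
Proof. by case: a; case: b; rewrite /= ?mulr1n ?mulr0n ?mul1r ?mul0r. Qed.

Section Spec.
Variable R : realType.
Variables TX TY : finType.
Variable pXY : {ffun TX * TY -> R}.
Hypothesis hp : is_dist pXY.

Section Coup.
Variable TQ : finType.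
Variable p : {ffun TX * TY * TQ -> R}.
Hypothesis hc : coupling pXY p.

Lemma marg xy : \sum_q p (xy, q) = pXY xy.
Proof.
case: hc => _ <-; rewrite [RHS]pmfE [RHS]sum_pair [RHS](bigD1 xy) //= [X in _ + X]big1 ?addr0.
  by apply: eq_bigr => q _; rewrite /vXY /= eqxx mul1r.
move=> xy' ne; apply: big1 => q _; by rewrite /vXY /= (negbTE ne) mul0r.
Qed.

Lemma pmf_tr (U : eqType) (F : TX * TY -> U) u :
  pmf p (fun s => F (vXY s)) u = pmf pXY F u.
Proof.
rewrite !pmfE sum_pair; apply: eq_bigr => xy _.
by rewrite -marg mulr_sumr.
Qed.

Lemma ent_tr (U : eqType) (F : TX * TY -> U) :
  ent p (fun s => F (vXY s)) = ent pXY F.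
Proof.
rewrite !entE sum_pair; congr (- _); apply: eq_bigr => xy _.
rewrite -marg mulr_suml; apply: eq_bigr => q _.
by rewrite pmf_tr.
Qed.


Lemma p0c : forall t, 0 <= p t.
Proof. by case: hc => -[]. Qed.

Lemma condX_dec x s :
  markov p (@vX TX TY TQ) (@vQ TX TY TQ) (@vY TX TY TQ) ->
  markov p (@vX TX TY TQ) (@vY TX TY TQ) (@vQ TX TY TQ) -> 0 < p s ->
  condX pXY (vY s) x =
  pmf p (fun t => (vX t, vQ t)) (x, vQ s) / pmf p (@vQ TX TY TQ) (vQ s).
Proof.
move=> m1 m2 ps.
have m1' := m1 x (vQ s) (vY s); have m2' := m2 x (vY s) (vQ s).
move: m1' m2'.
have -> : pmf p (fun t => (vX t, vY t)) (x, vY s) = pXY (x, vY s).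
  transitivity (pmf pXY (fun xy => (xy.1, xy.2)) (x, vY s)).
    exact: (pmf_tr (fun xy => (xy.1, xy.2))).
  rewrite pmfE -[RHS](sum_ind1 (x, vY s) pXY); apply: eq_bigr => -[a b] _ //.
have ePy : pmf p (@vY TX TY TQ) (vY s) = pY pXY (vY s).
  exact: (pmf_tr (fun xy => xy.2)).
rewrite ePy.
have -> : pmf p (fun t => (vX t, vY t, vQ t)) (x, vY s, vQ s) =
          pmf p (fun t => (vX t, vQ t, vY t)) (x, vQ s, vY s).
  by rewrite !pmfE; apply: eq_bigr => t _; rewrite !xpair_eqE andbAC.
have -> : pmf p (fun t => (vQ t, vY t)) (vQ s, vY s) =
          pmf p (fun t => (vY t, vQ t)) (vY s, vQ s).
  by rewrite !pmfE; apply: eq_bigr => t _; rewrite !xpair_eqE andbC.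
have p0 := p0c.
have hy : 0 < pY pXY (vY s).
  by rewrite -ePy; exact: lt_le_trans ps (pmf_ge p0 _ s).
have hq : 0 < pmf p (@vQ TX TY TQ) (vQ s) by exact: lt_le_trans ps (pmf_ge p0 _ s).
have hyq : 0 < pmf p (fun t => (vY t, vQ t)) (vY s, vQ s).
  exact: lt_le_trans ps (pmf_ge p0 (fun t => (vY t, vQ t)) s).
move: hy hq hyq.
set A := pmf p (fun t => (vX t, vQ t, vY t)) (x, vQ s, vY s).
set Py := pY pXY (vY s).
set Pq := pmf p (@vQ TX TY TQ) (vQ s).
set Pyq := pmf p (fun t => (vY t, vQ t)) (vY s, vQ s).
set Pxq := pmf p (fun t => (vX t, vQ t)) (x, vQ s).
move=> hy hq hyq e1 e2.
rewrite /condX ffunE -/Py.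
move: (pXY (x, vY s)) e2 => Pxy e2.
clearbody A Py Pq Pyq Pxq.
have nzy : Py != 0 by rewrite (gt_eqF hy).
have nzq : Pq != 0 by rewrite (gt_eqF hq).
have nzyq : Pyq != 0 by rewrite (gt_eqF hyq).
have ea : Pxy = A * Py / Pyq by rewrite e2 mulfK.
have eb : Pxq = A * Pq / Pyq by rewrite e1 mulfK.
by rewrite ea eb (mulrAC A Py) (mulrAC A Pq) !mulfK.
Qed.


Section Chains.
Hypothesis m1 : markov p (@vX TX TY TQ) (@vQ TX TY TQ) (@vY TX TY TQ).
Hypothesis m2 : markov p (@vX TX TY TQ) (@vY TX TY TQ) (@vQ TX TY TQ).

Lemma gdet s s' : 0 < p s -> 0 < p s' -> vQ s = vQ s' ->
  QYX pXY (vXY s) = QYX pXY (vXY s').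
Proof.
move=> ps ps' e; apply/ffunP => x.
transitivity (condX pXY (vY s) x) => //.
transitivity (condX pXY (vY s') x) => //.
by rewrite (condX_dec x m1 m2 ps) (condX_dec x m1 m2 ps') e.
Qed.

Lemma coup_a : ent pXY (QYX pXY) <= ent p (@vQ TX TY TQ).
Proof.
rewrite -(ent_tr (QYX pXY)); apply: (ent_mono p0c) => s s' ps ps' e.
exact: gdet.
Qed.

Lemma coup_b : cent p (@vY TX TY TQ) (@vQ TX TY TQ) <= cent pXY (@rY TX TY) (QYX pXY).
Proof.
rewrite /cent -(ent_tr (fun t => (rY t, QYX pXY t))) -(ent_tr (QYX pXY)).
set g := fun s => QYX pXY (vXY s).
have -> : ent p (fun s => (rY (vXY s), QYX pXY (vXY s))) = ent p (fun s => (vY s, g s)) by [].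
have S := ssa p0c (@vY TX TY TQ) (@vQ TX TY TQ) g.
have h1 : ent p (fun s => (vY s, vQ s)) <= ent p (fun s => (vY s, vQ s, g s)).
  by apply: (ent_mono p0c) => s s' _ _ [e1 e2 e3]; rewrite e1 e2.
have h2 : ent p (fun s => (vQ s, g s)) <= ent p (@vQ TX TY TQ).
  apply: (ent_mono p0c) => s s' ps ps' e; rewrite e; congr pair.
  exact: gdet.
lra.
Qed.

End Chains.
End Coup.

Lemma pY_sum y : pY pXY y = \sum_a pXY (a, y).
Proof.
rewrite /pY pmfE sum_pair; apply: eq_bigr => a _.
by rewrite (sum_ind1 y (fun b => pXY (a, b))).
Qed.

Lemma pXY_fact a b : pXY (a, b) = condX pXY b a * pY pXY b.
Proof.
rewrite /condX ffunE.
have [e|nz] := eqVneq (pY pXY b) 0; last by rewrite divfK.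
rewrite e mulr0; apply/le_anti/andP; split; last by case: hp => h _; exact: h.
rewrite -e pY_sum (bigD1 a) //= lerDl; apply: sumr_ge0 => i _.
by case: hp => h _; exact: h.
Qed.

Definition cq (y : TY) : option TY := [pick y' | condX pXY y' == condX pXY y].

Lemma cq_condX y y' : cq y = cq y' <-> condX pXY y = condX pXY y'.
Proof.
split; last by move=> e; rewrite /cq e.
rewrite /cq; case: pickP => [z /eqP hz|h]; last by have := h y; rewrite eqxx.
case: pickP => [z' /eqP hz'|h]; last by [].
by case=> ez; rewrite -hz -hz' ez.
Qed.

Definition pc : {ffun TX * TY * option TY -> R} :=
  [ffun s => pXY s.1 * (s.2 == cq s.1.2)%:R].

Lemma pmf_c (U : eqType) (G : TX * TY * option TY -> U) u :
  pmf pc G u = pmf pXY (fun xy => G (xy, cq xy.2)) u.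
Proof.
rewrite !pmfE sum_pair; apply: eq_bigr => xy _.
under eq_bigr => q _ do rewrite ffunE /= mulrA.
by rewrite (sum_indr (cq xy.2) (fun q => (G (xy, q) == u)%:R * pXY xy)).
Qed.

Lemma ent_c (U : eqType) (G : TX * TY * option TY -> U) :
  ent pc G = ent pXY (fun xy => G (xy, cq xy.2)).
Proof.
rewrite !entE sum_pair; congr (- _); apply: eq_bigr => xy _.
under eq_bigr => q _ do rewrite ffunE /= pmf_c mulrAC.
by rewrite (sum_indr (cq xy.2)
  (fun q => pXY xy * ln (pmf pXY (fun xy0 => G (xy0, cq xy0.2)) (G (xy, q))))).
Qed.

Lemma coup_c : coupling pXY pc.
Proof.
split; first split.
- move=> s; rewrite ffunE; apply: mulr_ge0; last exact: ler0n.
  by case: hp => h _; exact: h.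
- rewrite sum_pair; case: hp => _ <-; apply: eq_bigr => xy _.
  under eq_bigr => q _ do rewrite ffunE /=.
  exact: (sum_indr (cq xy.2) (fun _ => pXY xy)).
- move=> xy; rewrite pmf_c pmfE.
  exact: (sum_ind1 xy pXY).
Qed.


Ltac simpind := rewrite /= ?mulr1n ?mulr0n ?mul1r ?mul0r ?mulr0 ?mulr1 //.

Lemma m2_c : markov pc (@vX TX TY _) (@vY TX TY _) (@vQ TX TY _).
Proof.
move=> x y q; rewrite !pmf_c /vX /vY /vQ /=.
have E3 : pmf pXY (fun t => (t.1, t.2, cq t.2)) (x, y, q) = (cq y == q)%:R * pXY (x, y).
  rewrite pmfE -(sum_ind1 (x, y) pXY) mulr_sumr; apply: eq_bigr => -[a b] _.
  rewrite /= !xpair_eqE; case: (a =P x) => [->|_]; case: (b =P y) => [->|_]; simpind.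
have Eyq : pmf pXY (fun t => (t.2, cq t.2)) (y, q) = (cq y == q)%:R * pY pXY y.
  rewrite /pY !pmfE mulr_sumr; apply: eq_bigr => t _.
  rewrite xpair_eqE; case: eqP => [->|_]; simpind.
have Exy : pmf pXY (fun t => (t.1, t.2)) (x, y) = pXY (x, y).
  rewrite pmfE -(sum_ind1 (x, y) pXY); apply: eq_bigr => -[a b] _ //.
rewrite E3 Eyq Exy /pY; ring.
Qed.

Lemma m1_c : markov pc (@vX TX TY _) (@vQ TX TY _) (@vY TX TY _).
Proof.
move=> x q y; rewrite !pmf_c /vX /vY /vQ /=.
have E3 : pmf pXY (fun t => (t.1, cq t.2, t.2)) (x, q, y) = (cq y == q)%:R * pXY (x, y).
  rewrite pmfE -(sum_ind1 (x, y) pXY) mulr_sumr; apply: eq_bigr => -[a b] _.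
  rewrite /= !xpair_eqE; case: (a =P x) => [->|_]; case: (b =P y) => [->|_]; rewrite ?andbT ?andbF; simpind.
have Eqy : pmf pXY (fun t => (cq t.2, t.2)) (q, y) = (cq y == q)%:R * pY pXY y.
  rewrite /pY !pmfE mulr_sumr; apply: eq_bigr => t _.
  rewrite xpair_eqE; case: (t.2 =P y) => [->|_]; rewrite ?andbT ?andbF; simpind.
rewrite E3 Eqy.
have [e|ne] := eqVneq (cq y) q; last by simpind.
rewrite -e; simpind.
have Pq : pmf pXY (fun t => cq t.2) (cq y) = \sum_b (cq b == cq y)%:R * pY pXY b.
  rewrite pmfE sum_pair (exchange_big (R:=R)) /=; apply: eq_bigr => b _.
  by rewrite pY_sum mulr_sumr.
have Pxq : pmf pXY (fun t => (t.1, cq t.2)) (x, cq y) = condX pXY y x * pmf pXY (fun t => cq t.2) (cq y).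
  rewrite Pq pmfE sum_pair mulr_sumr.
  rewrite (exchange_big (R:=R)) /=; apply: eq_bigr => b _.
  under eq_bigr => a _ do rewrite xpair_eqE indA -mulrA.
  rewrite (sum_ind1 x (fun a => (cq b == cq y)%:R * pXY (a, b))).
  case: eqP => [/cq_condX e'|_]; last by simpind.
  by rewrite pXY_fact e'; simpind.
rewrite Pxq (pXY_fact x y); ring.
Qed.

End Spec.

Theorem theorem1 (R : realType) (TX TY : finType) (pXY : {ffun TX * TY -> R})
  (hp : is_dist pXY) :
  [/\ is_min (tC_set pXY) (ent pXY (QYX pXY)) /\ tCW pXY = ent pXY (QYX pXY),
      is_max (tP_set pXY) (cent pXY (@rY TX TY) (QYX pXY))
        /\ tPW pXY = cent pXY (@rY TX TY) (QYX pXY),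
      ent pXY (@rY TX TY) = tCW pXY + tPW pXY
        /\ tCW pXY + tPW pXY
           = ent pXY (QYX pXY) + cent pXY (@rY TX TY) (QYX pXY)
  & CW pXY <= tCW pXY].
Proof.
have p0 : forall t, 0 <= pXY t by case: hp.
have hc := coup_c hp.
have valC' : ent pXY (fun xy => cq pXY xy.2) = ent pXY (QYX pXY).
  apply: ent_eq => // s s'; exact: cq_condX.
have valC : ent (pc pXY) (@vQ TX TY _) = ent pXY (QYX pXY) by rewrite ent_c.
have memC : tC_set pXY (ent pXY (QYX pXY)).
  by exists _, (pc pXY); split; [exact: hc | exact: m1_c | exact: m2_c | rewrite valC].
have minC : is_min (tC_set pXY) (ent pXY (QYX pXY)).
  split => // r [TQ [p [hc' m1 m2 ->]]]; exact: coup_a hc' m1 m2.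
have eC : tCW pXY = ent pXY (QYX pXY).
  apply/le_anti/andP; split.
    by apply: ge_inf => //; exists (ent pXY (QYX pXY)) => r /minC.2.
  by apply: lb_le_inf; [exists (ent pXY (QYX pXY)) | move=> r /minC.2].
have valP : cent (pc pXY) (@vY TX TY _) (@vQ TX TY _) = cent pXY (@rY TX TY) (QYX pXY).
  rewrite /cent !ent_c valC'; congr (_ - _).
  apply: ent_eq => // s s'; split => -[e1 _]; move: e1; rewrite /rY /vY /vQ /QYX /= => -> //.
have memP : tP_set pXY (cent pXY (@rY TX TY) (QYX pXY)).
  by exists _, (pc pXY); split; [exact: hc | exact: m1_c | exact: m2_c | rewrite valP].
have maxP : is_max (tP_set pXY) (cent pXY (@rY TX TY) (QYX pXY)).
  split => // r [TQ [p [hc' m1 m2 ->]]]; exact: coup_b hc' m1 m2.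
have eP : tPW pXY = cent pXY (@rY TX TY) (QYX pXY).
  apply/le_anti/andP; split.
    by apply: ge_sup; [exists (cent pXY (@rY TX TY) (QYX pXY)) | move=> r /maxP.2].
  by apply: ub_le_sup => //; exists (cent pXY (@rY TX TY) (QYX pXY)) => r /maxP.2.
have eYQ : ent pXY (fun t => (rY t, QYX pXY t)) = ent pXY (@rY TX TY).
  apply: ent_eq => // s s'; split; first by case.
  by rewrite /rY /QYX => ->.
split => //.
  by rewrite eC eP /cent eYQ; split => //; ring.
rewrite eC.
have [hl|hl] := pselect (has_lbound (CW_set pXY)); last first.
  rewrite /CW inf_out; first by apply: (ent_ge0 p0 (QYX pXY)); case: hp.
  by move=> [_ h]; exact: hl h.
rewrite /CW; apply: (ge_inf hl).
exists _, (pc pXY); split; [exact: hc | exact: m1_c |].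
rewrite /minf !ent_c -valC' /=.
have -> : ent pXY (fun xy => (vXY (xy, cq pXY xy.2), vQ (xy, cq pXY xy.2))) =
          ent pXY (fun xy => vXY (xy, cq pXY xy.2)).
  apply: ent_eq => // s s'; split; first by case.
  by rewrite /vXY /vQ /= => ->.
ring.
Qed.
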